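(* Let $\eta:\mathbb{R}^d\to\mathbb{R}$ be a twice differentiable convex function. Then $\eta$ satisfies the design condition for a general conservation law if and only if it satisfies the homogeneity property $$\mathbf{v}\cdot\frac{\partial\eta}{\partial\mathbf{v}}(\mathbf{v})=\eta(\mathbf{v})\quad\text{for all }\mathbf{v}\in\mathbb{R}^d.$$
   Context: For a smooth flux $\mathbf{f}:\mathbb{R}\to\mathbb{R}^d$ and a smooth solution $\phi$ of $\partial_t\phi+\nabla\cdot\mathbf{f}(\phi)=0$ on $\Omega\times(0,T)$, $\Omega\subset\mathbb{R}^d$, define the non-conservative term $\mathscr{A}=(\mathbf{H}_{\nabla\phi}\eta\,\nabla\phi)\cdot(\mathbf{H}_{\mathbf{x}}\phi\,\frac{\partial\mathbf{f}}{\partial\phi})$, where $\mathbf{H}_{\mathbf{x}}\phi$ is the spatial Hessian of $\phi$, $\mathbf{H}_{\nabla\phi}\eta$ is the Hessian of $\eta$ with respect to its argument evaluated at $\nabla\phi$, and $\frac{\partial\mathbf{f}}{\partial\phi}=\mathbf{f}'(\phi)$. The function $\eta$ satisfies the design condition (for a general conservation law) if $\eta$ is convex, $\eta(\mathbf{0})=0$, and $\mathscr{A}=0$ for every smooth flux $\mathbf{f}$ and every smooth solution $\phi$ of the corresponding conservation law. *)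

(* Defs.v *)
From HB Require Import structures.
From mathcomp Require Import all_boot all_order all_algebra.
From mathcomp Require Import all_classical all_reals.
From mathcomp Require Import topology normedtype derive convex.
Set Implicit Arguments. Unset Strict Implicit. Unset Printing Implicit Defensive.
Import Order.TTheory GRing.Theory Num.Theory.
Import numFieldNormedType.Exports.
Local Open Scope classical_set_scope.
Local Open Scope ring_scope.

(* C^n regularity on a set U (intended: U open), via iterated directional
   (Frechet) derivatives:  C^0 = continuous at every point of U;
   C^{n+1} = differentiable at every point of U and every directional
   derivative 'D_v g is C^n on U. *)
Fixpoint Ck_on (K : realType) (V W : normedModType K) (n : nat)
    (U : set V) (g : V -> W) : Prop :=
  match n with
  | 0%N => forall x, U x -> {for x, continuous g}
  | n'.+1 => (forall x, U x -> differentiable g x) /\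
             (forall v : V, Ck_on n' U (fun y => 'D_v g y))
  end.

Definition smooth_on (K : realType) (V W : normedModType K)
    (U : set V) (g : V -> W) : Prop := forall n, Ck_on n U g.

Definition ev (K : realType) (d : nat) (i : 'I_d) : 'rV[K]_d := delta_mx 0 i.

Definition pd (K : realType) (d : nat) (eta : 'rV[K]_d -> K) (i : 'I_d)
    (v : 'rV[K]_d) : K := 'D_(@ev K d i) eta v.
Definition grad (K : realType) (d : nat) (eta : 'rV[K]_d -> K)
    (v : 'rV[K]_d) : 'rV[K]_d := \row_i pd eta i v.
Definition hess (K : realType) (d : nat) (eta : 'rV[K]_d -> K)
    (v : 'rV[K]_d) : 'M[K]_d := \matrix_(i, j) pd (pd eta i) j v.

Definition twice_differentiable (K : realType) (d : nat)
    (eta : 'rV[K]_d -> K) : Prop :=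
  (forall v, differentiable eta v) /\
  (forall i v, differentiable (pd eta i) v).

Definition convex_on_Rd (K : realType) (d : nat) (eta : 'rV[K]_d -> K) : Prop :=
  convex_function (setT : set (convex_lmodType 'rV[K]_d)) eta.

(* Space-time points p = (x, t) in R^d x R. *)
Definition pdx (K : realType) (d : nat) (g : 'rV[K]_d * K -> K) (i : 'I_d)
    (p : 'rV[K]_d * K) : K := 'D_((@ev K d i, 0) : 'rV[K]_d * K) g p.
Definition pdt (K : realType) (d : nat) (g : 'rV[K]_d * K -> K)
    (p : 'rV[K]_d * K) : K := 'D_((0, 1) : 'rV[K]_d * K) g p.

Definition cyl (K : realType) (d : nat) (Om : set 'rV[K]_d) (T : K)
    : set ('rV[K]_d * K) := [set p | Om p.1 /\ 0 < p.2 < T].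

Definition solves (K : realType) (d : nat) (f : K -> 'rV[K]_d)
    (phi : 'rV[K]_d * K -> K) (U : set ('rV[K]_d * K)) : Prop :=
  forall p, U p ->
    pdt phi p + \sum_(i < d) pdx (fun q => f (phi q) 0 i) i p = 0.

Definition gradx (K : realType) (d : nat) (phi : 'rV[K]_d * K -> K)
    (p : 'rV[K]_d * K) : 'rV[K]_d := \row_i pdx phi i p.
Definition hessx (K : realType) (d : nat) (phi : 'rV[K]_d * K -> K)
    (p : 'rV[K]_d * K) : 'M[K]_d := \matrix_(i, j) pdx (pdx phi i) j p.

Definition Aterm (K : realType) (d : nat) (eta : 'rV[K]_d -> K)
    (f : K -> 'rV[K]_d) (phi : 'rV[K]_d * K -> K) (p : 'rV[K]_d * K) : K :=
  let g := gradx phi p in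
  let fp := 'D_1 f (phi p) in
  \sum_(i < d) ((\sum_(j < d) hess eta g i j * g 0 j) *
                (\sum_(k < d) hessx phi p i k * fp 0 k)).

Definition design_condition (K : realType) (d : nat) (Om : set 'rV[K]_d)
    (T : K) (eta : 'rV[K]_d -> K) : Prop :=
  convex_on_Rd eta /\ eta 0 = 0 /\
  forall (f : K -> 'rV[K]_d) (phi : 'rV[K]_d * K -> K),
    smooth_on setT f -> smooth_on (cyl Om T) phi -> solves f phi (cyl Om T) ->
    forall p, cyl Om T p -> Aterm eta f phi p = 0.

Definition homogeneity (K : realType) (d : nat) (eta : 'rV[K]_d -> K) : Prop :=
  forall v : 'rV[K]_d, \sum_(i < d) v 0 i * pd eta i v = eta v.

(* Main.v *)
Require Import Defs.
From HB Require Import structures.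
From mathcomp Require Import all_boot all_order all_algebra.
From mathcomp Require Import all_classical all_reals.
From mathcomp Require Import topology normedtype derive convex.
From mathcomp Require Import ring lra.
Import Order.TTheory GRing.Theory Num.Theory.
Import numFieldNormedType.Exports.
Local Open Scope classical_set_scope.
Local Open Scope ring_scope.

Section S.
Variable R : realType.
Variable d : nat.
Local Notation P := ('rV[R]_d * R)%type.

Lemma fst_diff (q : P) : differentiable (@fst 'rV[R]_d R) q.
Proof.
have fst_lin : linear (@fst 'rV[R]_d R) by [].
pose fL : {linear P -> 'rV[R]_d} := HB.pack (@fst 'rV[R]_d R)
   (GRing.isLinear.Build _ _ _ _ _ fst_lin).
have -> : (@fst 'rV[R]_d R) = fL by [].
apply: linear_differentiable => x; exact: cvg_fst.
Qed.

Lemma snd_diff (q : P) : differentiable (@snd 'rV[R]_d R) q.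
Proof.
have snd_lin : linear (@snd 'rV[R]_d R) by [].
pose fL : {linear P -> R} := HB.pack (@snd 'rV[R]_d R)
   (GRing.isLinear.Build _ _ _ _ _ snd_lin).
have -> : (@snd 'rV[R]_d R) = fL by [].
apply: linear_differentiable => x; exact: cvg_snd.
Qed.

Lemma coord_diff (j : 'I_d) (q : P) : differentiable (fun q : P => q.1 0 j) q.
Proof.
have -> : (fun q : P => q.1 0 j) = (fun N : 'rV[R]_d => N 0 j) \o fst by [].
apply: differentiable_comp; [exact: fst_diff | exact: differentiable_coord].
Qed.

Lemma pair_comp (h : R) (u q : P) : (h *: u + q).1 = h *: u.1 + q.1 /\ (h *: u + q).2 = h * u.2 + q.2.
Proof. by []. Qed.


Lemma D_quadV {V W : normedModType R} (f : V -> W) x u (A B : W) :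
  (forall h : R, f (h *: u + x) = f x + h *: A + h ^+ 2 *: B) -> is_derive x u f A.
Proof.
move=> H.
have C : (fun h => h^-1 *: ((f \o shift x) (h *: u) - f x)) @ 0^' --> A.
  have E : {near 0^', (fun h : R => A + h *: B) =1
      (fun h => h^-1 *: ((f \o shift x) (h *: u) - f x))}.
    near=> h.
    have hn0 : h != 0 by near: h; exact: nbhs_dnbhs_neq.
    rewrite /= H.
    rewrite -[f x + _ + _]addrA addrC addrK expr2 -scalerA -scalerDr scalerA.
    by rewrite mulVf // scale1r.
  apply: cvg_trans (near_eq_cvg E) _.
  suff : (fun h : R => A + h *: B) @ 0^' --> A + 0 *: B by rewrite scale0r addr0.
  apply: (@continuous_withinNx _ _ (fun h : R => A + h *: B) 0).1.
  apply: continuousD; first exact: cst_continuous.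
  exact: scalel_continuous.
split; first by apply/cvg_ex; exists A; exact: C.
exact: cvg_lim C.
Unshelve. all: by end_near.
Qed.

Lemma D_quad {V : normedModType R} (f : V -> R) x u (A B : R) :
  (forall h, f (h *: u + x) = f x + h * A + h ^+ 2 * B) -> is_derive x u f A.
Proof. by move=> H; apply: (@D_quadV _ _ f x u A B). Qed.

Fixpoint Pk {V W : normedModType R} (k : nat) (g : V -> W) : Prop :=
  match k with
  | 0%N => exists c, g = cst c
  | k'.+1 => (forall x, differentiable g x) /\ forall v, Pk k' (fun y => 'D_v g y)
  end.

Lemma Pk_Ck {V W : normedModType R} k n (U : set V) (g : V -> W) :
  Pk k g -> Ck_on n U g.
Proof.
elim: n k g => [|n IH] [|k] g /=.
- by case=> c -> x _; exact: cst_continuous.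
- by case=> dg _ x _; exact: differentiable_continuous.
- case=> c ->; split => [x _|v]; first exact: differentiable_cst.
  apply: (IH 0%N); exists 0; apply/funext => y; exact: derive_cst.
- by case=> dg dD; split => [x _|v]; [exact: dg | exact: (IH k _ (dD v))].
Qed.

Lemma dD {V : normedModType R} (f g : V -> R) x : differentiable f x ->
  differentiable g x -> differentiable (fun q => f q + g q) x.
Proof. by move=> ? ?; exact: differentiableD. Qed.
Lemma dB {V : normedModType R} (f g : V -> R) x : differentiable f x ->
  differentiable g x -> differentiable (fun q => f q - g q) x.
Proof. by move=> ? ?; exact: differentiableB. Qed.
Lemma dM {V : normedModType R} (f g : V -> R) x : differentiable f x ->
  differentiable g x -> differentiable (fun q => f q * g q) x.
Proof. by move=> ? ?; exact: differentiableM. Qed.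
Lemma dC {V : normedModType R} (c : R) (x : V) : differentiable (fun _ : V => c) x.
Proof. exact: differentiable_cst. Qed.
Lemma dS {V : normedModType R} n (F : 'I_n -> V -> R) x :
  (forall i, differentiable (F i) x) ->
  differentiable (fun q => \sum_(i < n) F i q) x.
Proof.
move=> dF; have -> : (fun q => \sum_(i < n) F i q) = \sum_(i < n) F i.
  by apply/funext => q; rewrite fct_sumE.
exact: differentiable_sum.
Qed.


Section Phi.
Variables (w : 'rV[R]_d) (k : 'I_d) (s : R).

Definition ell (q : P) : R := q.1 0 k - q.2 - s.
Definition ell0 (u : P) : R := u.1 0 k - u.2.
Definition phi0 (q : P) : R :=
  \sum_(j < d) w 0 j * q.1 0 j - q.2 * w 0 k + ell q ^+ 2 / 2.
Definition Dphi (u q : P) : R :=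
  \sum_(j < d) w 0 j * u.1 0 j - u.2 * w 0 k + ell q * ell0 u.

Lemma sum_exp (h : R) (u q : P) :
  \sum_(j < d) w 0 j * (h *: u + q).1 0 j =
  \sum_(j < d) w 0 j * q.1 0 j + h * \sum_(j < d) w 0 j * u.1 0 j.
Proof.
rewrite mulr_sumr -big_split /=; apply: eq_bigr => j _.
by rewrite !mxE; ring.
Qed.

Lemma phi_exp (h : R) (u q : P) :
  phi0 (h *: u + q) = phi0 q + h * Dphi u q + h ^+ 2 * (ell0 u ^+ 2 / 2).
Proof.
rewrite /phi0 /Dphi sum_exp /ell /ell0 /=.
rewrite !mxE; change (h *: u.2) with (h * u.2).
set S1 := \sum_(j < d) _. set S2 := \sum_(j < d) _. set a := u.1 0 k. set b := q.1 0 k. set c := u.2. set e := q.2. set z := w 0 k. by field.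
Qed.

Lemma phi_deriv (u q : P) : is_derive q u phi0 (Dphi u q).
Proof. by apply: D_quad (ell0 u ^+ 2 / 2) _ => h; rewrite phi_exp. Qed.

Lemma Dphi_exp (h : R) (u u' q : P) :
  Dphi u (h *: u' + q) = Dphi u q + h * (ell0 u' * ell0 u) + h ^+ 2 * 0.
Proof. rewrite /Dphi /ell /ell0 /= !mxE; change (h *: u'.2) with (h * u'.2); ring. Qed.

Lemma Dphi_deriv (u u' q : P) : is_derive q u' (Dphi u) (ell0 u' * ell0 u).
Proof. by apply: D_quad 0 _ => h; rewrite Dphi_exp. Qed.

Lemma ell_diff q : differentiable ell q.
Proof.
by apply: dB; [apply: dB; [exact: coord_diff | exact: snd_diff] | exact: dC].
Qed.

Lemma phi_diff q : differentiable phi0 q.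
Proof.
apply: dD; first apply: dB.
- by apply: dS => j; apply: dM; [exact: dC | exact: coord_diff].
- by apply: dM; [exact: snd_diff | exact: dC].
- apply: dM; last exact: dC.
  by rewrite /GRing.exp /=; apply: dM; apply: ell_diff.
Qed.

Lemma Dphi_diff u q : differentiable (Dphi u) q.
Proof.
apply: dD; first exact: dC.
by apply: dM; [exact: ell_diff | exact: dC].
Qed.

Lemma phi_Pk : Pk 2 phi0.
Proof.
split; first exact: phi_diff.
move=> v.
have -> : (fun y => 'D_v phi0 y) = Dphi v.
  by apply/funext => y; case: (phi_deriv v y).
split; first exact: Dphi_diff.
move=> u; exists (ell0 u * ell0 v); apply/funext => y.
by case: (Dphi_deriv v u y).
Qed.


Definition flux (r : R) : 'rV[R]_d := r *: ev R k.

Lemma flux_deriv (r v : R) : is_derive r v flux (v *: ev R k).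
Proof.
apply: (@D_quadV _ _ flux r v _ 0) => h.
by rewrite /flux scaler0 addr0 scalerDl scalerA addrC.
Qed.

Lemma flux_Pk : Pk 1 flux.
Proof.
split; first by move=> x; apply: (@differentiableZl _ _ _ id); exact/derivable1_diffP/derivable_id.
move=> v; exists (v *: ev R k); apply/funext => y.
by case: (flux_deriv y v).
Qed.

Lemma ev_sym (i j : 'I_d) : (ev R i) 0 j = (ev R j) 0 i.
Proof. by rewrite /ev !mxE eq_sym. Qed.

Lemma ev_kk : (ev R k) 0 k = 1.
Proof. by rewrite /ev !mxE !eqxx. Qed.

Lemma ev_sum (c : 'I_d -> R) (i : 'I_d) : \sum_(j < d) (ev R i) 0 j * c j = c i.
Proof.
rewrite (bigD1 i) //= big1 => [|j ji]; first by rewrite /ev mxE !eqxx mul1r addr0.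
by rewrite /ev mxE (negbTE ji) andbF mul0r.
Qed.

Lemma Dphi_ev (i : 'I_d) q : Dphi ((ev R i, 0) : P) q = w 0 i + ell q * (ev R k) 0 i.
Proof.
rewrite /Dphi /ell0 /= mul0r subr0 subr0 ev_sym.
congr (_ + _); under eq_bigr do rewrite mulrC; exact: ev_sum.
Qed.

Lemma pdx_phi (i : 'I_d) q : pdx phi0 i q = w 0 i + ell q * (ev R k) 0 i.
Proof. by rewrite /pdx; case: (phi_deriv (ev R i, 0) q) => _ ->; exact: Dphi_ev. Qed.

Lemma pdx_pdx_phi (i j : 'I_d) q : pdx (pdx phi0 i) j q = (ev R k) 0 j * (ev R k) 0 i.
Proof.
have -> : pdx phi0 i = Dphi ((ev R i, 0) : P).
  by apply/funext => y; rewrite /pdx; case: (phi_deriv (ev R i, 0) y).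
rewrite /pdx; case: (Dphi_deriv (ev R i, 0) (ev R j, 0) q) => _ ->.
by rewrite /ell0 /= !subr0 ev_sym [X in _ * X]ev_sym.
Qed.

Lemma pdt_phi q : pdt phi0 q = - w 0 k - ell q.
Proof.
rewrite /pdt; case: (phi_deriv (0, 1) q) => _ ->.
rewrite /Dphi /ell0 /= big1 => [|j _]; last by rewrite mxE mulr0.
rewrite mxE; ring.
Qed.

Lemma solves_phi (U : set P) : solves flux phi0 U.
Proof.
move=> p _.
have E i : pdx (fun q => flux (phi0 q) 0 i) i p = (w 0 i + ell p * (ev R k) 0 i) * (ev R k) 0 i.
  have -> : (fun q => flux (phi0 q) 0 i) = (fun q => phi0 q * (ev R k) 0 i).
    by apply/funext => q; rewrite /flux mxE.
  rewrite /pdx -Dphi_ev.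
  have Q : is_derive p ((ev R i, 0) : P) (fun q => phi0 q * (ev R k) 0 i)
    (Dphi (ev R i, 0) p * (ev R k) 0 i).
    apply: D_quad (ell0 (ev R i, 0) ^+ 2 / 2 * (ev R k) 0 i) _ => h.
    by rewrite phi_exp; ring.
  by case: Q.
under eq_bigr do rewrite E.
rewrite pdt_phi.
have -> : \sum_(i < d) (w 0 i + ell p * (ev R k) 0 i) * (ev R k) 0 i =
   \sum_(i < d) (ev R k) 0 i * (w 0 i + ell p * (ev R k) 0 i).
  by apply: eq_bigr => i _; rewrite mulrC.
rewrite ev_sum ev_kk; ring.
Qed.

End Phi.
Implicit Types (eta : 'rV[R]_d -> R).

Lemma pd_lin (f : 'rV[R]_d -> R) x v : differentiable f x ->
  'D_v f x = \sum_(i < d) v 0 i * pd f i x.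
Proof.
move=> df; rewrite deriveE // {1}(row_sum_delta v) linear_sum.
apply: eq_bigr => i _; rewrite linearZ /= /pd deriveE //.
Qed.

Lemma ray_derive {V : normedModType R} (F : V -> R) v t :
  derivable F (t *: v) v ->
  is_derive t 1 (fun s : R => F (s *: v)) ('D_v F (t *: v)).
Proof.
have E : (fun h : R => h^-1 *: (((fun s : R => F (s *: v)) \o shift t) (h *: 1)
             - F (t *: v))) =
         (fun h : R => h^-1 *: ((F \o shift (t *: v)) (h *: v) - F (t *: v))).
  by apply/funext => h /=; rewrite scalerDl [h *: 1]mulr1.
move=> dF; split; first by rewrite /derivable E.
by rewrite /derive E.
Qed.

Lemma mvt_const (h : R -> R) :
  (forall t, derivable h t 1) -> (forall t, 0 < t < 1 -> 'D_1 h t = 0) ->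
  h 1 = h 0.
Proof.
move=> dh h0.
have [||c] := @MVT R h ('D_1 h) 0 1 ltr01.
- by move=> x _; apply: derivableP.
- apply: continuous_subspaceT => x.
  exact/differentiable_continuous/derivable1_diffP.
- rewrite in_itv /= => c01.
  by rewrite h0 // mul0r => /eqP; rewrite subr_eq0 => /eqP.
Qed.

Lemma derivable_lincomb n (c : 'I_n -> R) (F : 'I_n -> R -> R) t :
  (forall i, derivable (F i) t 1) ->
  derivable (fun s => \sum_(i < n) c i * F i s) t 1.
Proof.
move=> dF.
have -> : (fun s => \sum_(i < n) c i * F i s) = \sum_(i < n) (c i \*: F i).
  by apply/funext => s; rewrite fct_sumE.
apply: derivable_sum => i; exact: derivableZ.
Qed.


Lemma ray_derivable {V : normedModType R} (F : V -> R) v t :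
  differentiable F (t *: v) -> derivable (fun s : R => F (s *: v)) t 1.
Proof. by move=> dF; case: (@ray_derive V F v t (@diff_derivable _ _ _ F _ v dF)). Qed.

Lemma ray_deriveE {V : normedModType R} (F : V -> R) v t :
  differentiable F (t *: v) ->
  'D_1 (fun s : R => F (s *: v)) t = 'D_v F (t *: v).
Proof. by move=> dF; case: (@ray_derive V F v t (@diff_derivable _ _ _ F _ v dF)). Qed.

Lemma homog_lin eta : twice_differentiable eta -> homogeneity eta ->
  forall v, eta v = \sum_(i < d) v 0 i * pd eta i 0.
Proof.
move=> [d1 d2] Hh v.
pose G := fun t : R => \sum_(i < d) v 0 i * pd eta i (t *: v).
have dG t : derivable G t 1.
  by apply: derivable_lincomb => i; apply: ray_derivable.
have eG : (fun t => t * G t) = (fun t => eta (t *: v)).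
  apply/funext => t; rewrite -Hh /G mulr_sumr; apply: eq_bigr => i _.
  by rewrite mxE mulrA.
have D0 t : 0 < t < 1 -> 'D_1 G t = 0.
  move=> /andP[t0 _].
  have : 'D_1 (fun s : R => s * G s) t = 'D_1 (fun s : R => eta (s *: v)) t.
    by rewrite eG.
  have -> : (fun s : R => s * G s) = (id : R -> R) * G by apply/funext.
  rewrite deriveM // ?derive_id ?ray_deriveE // pd_lin //.
  rewrite -/(G t) /GRing.scale /= mulr1 => /eqP.
  rewrite -subr_eq0 addrK mulf_eq0 gt_eqF //= => /eqP //.
have := @mvt_const G dG D0.
by rewrite /G scale1r scale0r Hh.
Qed.


Lemma lin_is_derive (C t : R) : is_derive t 1 (fun s : R => s * C) C.
Proof.
apply: D_quad (0 : R) _ => h.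
by rewrite [h *: 1]mulr1; ring.
Qed.

Lemma hw_lin eta : twice_differentiable eta -> eta 0 = 0 ->
  (forall w i, \sum_(j < d) hess eta w i j * w 0 j = 0) ->
  forall v, (forall i, pd eta i v = pd eta i 0) /\
            eta v = \sum_(i < d) v 0 i * pd eta i 0.
Proof.
move=> [d1 d2] e0 HW.
have pc v i : pd eta i v = pd eta i 0.
  pose h := fun t : R => pd eta i (t *: v).
  have := @mvt_const h (fun t => @ray_derivable _ (pd eta i) v t (d2 i _)).
  rewrite /h scale1r scale0r; apply.
  move=> t /andP[t0 _]; rewrite ray_deriveE // pd_lin //.
  have : t * (\sum_(j < d) v 0 j * pd (pd eta i) j (t *: v)) = 0.
    rewrite -[RHS](HW (t *: v) i) mulr_sumr; apply: eq_bigr => j _.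
    by rewrite !mxE; ring.
  by move/eqP; rewrite mulf_eq0 gt_eqF //= => /eqP.
move=> v; split => // .
pose C := \sum_(i < d) v 0 i * pd eta i 0.
pose g := (fun t : R => eta (t *: v)) - (fun t : R => t * C).
have dg t : derivable g t 1.
  apply: derivableB; first exact: ray_derivable.
  by case: (lin_is_derive C t).
have E : g 1 = g 0.
  apply: (@mvt_const g dg) => t _.
  rewrite deriveB; [|exact: ray_derivable|by case: (lin_is_derive C t)].
  rewrite ray_deriveE // pd_lin // (@derive_val _ _ _ _ _ _ _ (lin_is_derive C t)).
  apply/eqP; rewrite /C subr_eq0; apply/eqP; apply: eq_bigr => i _; by rewrite pc.
have E1 : eta (1 *: v) - 1 * C = eta (0 *: v) - 0 * C := E.
move: E1; rewrite scale1r scale0r e0 mul0r subr0 mul1r => /eqP.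
by rewrite subr_eq0 => /eqP.
Qed.


Lemma lin_pd eta (c : 'I_d -> R) : (forall v, eta v = \sum_(i < d) v 0 i * c i) ->
  forall i x, pd eta i x = c i.
Proof.
move=> H i x.
have Q : is_derive x (ev R i) eta (c i).
  apply: D_quad (0 : R) _ => h.
  rewrite !H.
  have -> : \sum_(j < d) (h *: ev R i + x) 0 j * c j =
      \sum_(j < d) x 0 j * c j + h * \sum_(j < d) (ev R i) 0 j * c j.
    rewrite mulr_sumr -big_split /=; apply: eq_bigr => j _.
    by rewrite !mxE; ring.
  by rewrite ev_sum; ring.
by case: Q.
Qed.

Lemma lin_hess eta (c : 'I_d -> R) : (forall v, eta v = \sum_(i < d) v 0 i * c i) ->
  forall w i j, hess eta w i j = 0.
Proof.
move=> H w i j; rewrite /hess mxE.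
have -> : pd eta i = cst (c i) by apply/funext => x; exact: lin_pd.
by rewrite /pd derive_cst.
Qed.


Lemma design_hw (Om : set 'rV[R]_d) (T : R) (eta : 'rV[R]_d -> R) :
  Om !=set0 -> 0 < T -> design_condition Om T eta ->
  forall w i, \sum_(j < d) hess eta w i j * w 0 j = 0.
Proof.
move=> [x0 Ox0] T0 [_ [_ HA]] w i.
pose s := x0 0 i - T / 2.
pose p0 : P := (x0, T / 2).
have cp : cyl Om T p0.
  split => //=; apply/andP; split; first by rewrite divr_gt0.
  by rewrite ltr_pdivrMr // ltr_pMr // ltr1n.
have := HA (flux i) (phi0 w i s) _ _ (solves_phi w i s _) p0 cp.
have G : gradx (phi0 w i s) p0 = w.
  apply/rowP => j; rewrite mxE pdx_phi /ell /= /s subrr mul0r addr0.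
  by [].
have F : 'D_1 (flux i) (phi0 w i s p0) = ev R i.
  by case: (flux_deriv i (phi0 w i s p0) 1) => _ ->; rewrite scale1r.
have Hs a : \sum_(b < d) hessx (phi0 w i s) p0 a b * (ev R i) 0 b = (ev R i) 0 a.
  under eq_bigr do rewrite mxE pdx_pdx_phi.
  have -> : \sum_(b < d) (ev R i) 0 b * (ev R i) 0 a * (ev R i) 0 b =
     \sum_(b < d) (ev R i) 0 b * ((ev R i) 0 b * (ev R i) 0 a).
    by apply: eq_bigr => b _; rewrite mulrC.
  by rewrite (ev_sum (fun b => (ev R i) 0 b * (ev R i) 0 a)) ev_kk mul1r.
rewrite /Aterm.
cbv zeta.
rewrite G.
have Hs2 a : \sum_(b < d) hessx (phi0 w i s) p0 a b * ('D_1 (flux i) (phi0 w i s p0)) 0 b = (ev R i) 0 a.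
  by rewrite F; exact: Hs.
have sf : smooth_on setT (flux i) by move=> n; exact: (@Pk_Ck _ _ 1%N n _ _ (flux_Pk i)).
have sp : smooth_on (cyl Om T) (phi0 w i s) by move=> n; exact: (@Pk_Ck _ _ 2%N n _ _ (phi_Pk w i s)).
move=> /(_ sf sp).
rewrite (eq_bigr (fun a => (\sum_(j < d) hess eta w a j * w 0 j) * (ev R i) 0 a)); last first.
  by move=> a _; rewrite Hs2.
rewrite (eq_bigr (fun a => (ev R i) 0 a * (\sum_(j < d) hess eta w a j * w 0 j))); last first.
  by move=> a _; rewrite mulrC.
by rewrite (ev_sum (fun a => \sum_(j < d) hess eta w a j * w 0 j)).
Qed.
End S.

Theorem lemma2 (R : realType) (d : nat) (Om : set 'rV[R]_d) (T : R)
  (eta : 'rV[R]_d -> R) :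
  open Om -> Om !=set0 -> 0 < T ->
  twice_differentiable eta -> convex_on_Rd eta ->
  (design_condition Om T eta <-> homogeneity eta).
Proof.
move=> _ Om0 T0 td cv; split.
- move=> dc; have [_ [e0 _]] := dc.
  have HW := @design_hw R d Om T eta Om0 T0 dc.
  move=> v; have [pc ->] := @hw_lin R d eta td e0 HW v.
  by apply: eq_bigr => i _; rewrite pc.
- move=> Hh; have lin := @homog_lin R d eta td Hh.
  split => //; split.
    rewrite lin big1 // => i _; by rewrite mxE mul0r.
  move=> f phi _ _ _ p _; rewrite /Aterm big1 // => i _.
  rewrite big1 ?mul0r // => j _.
  by rewrite (@lin_hess R d eta _ lin) mul0r.
Qed.
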